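(* There exists an absolute constant $c>0$ such that for every positive integer $n$ there is a set $S \subset [n]^2 = \{1,\dots,n\}^2$ with $|S| \ge c\, n^{5/4}$ which is skew corner-free, i.e. $S$ contains no three points of the form $$(x,y),\ (x,y+d),\ (x+d,y')$$ with $x,y,y'$ integers and $d \neq 0$ an integer.
   Context: A triple of points of the form $(x,y),(x,y+d),(x+d,y')$ with $d\neq 0$ (and $x,y,y'$ arbitrary) is called a skew corner; a set is skew corner-free if it contains no skew corner (all three points lying in the set). *)

(* Defs.v *)
From Stdlib Require Import Reals ZArith List.
Open Scope Z_scope.

(* A finite set S ⊂ Z^2 is represented by a duplicate-free list. *)
Definition in_grid (n : Z) (p : Z * Z) : Prop :=
  1 <= fst p <= n /\ 1 <= snd p <= n.

Definition skew_corner_free (S : list (Z * Z)) : Prop :=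
  forall x y y' d : Z, d <> 0 ->
    ~ (In (x, y) S /\ In (x, y + d) S /\ In (x + d, y') S).

(* Main.v *)
Require Import Defs.
From Stdlib Require Import Reals ZArith List Lia Lra.
Import ListNotations.
Open Scope Z_scope.

Definition vals : list Z := [0;1;2;3;4].
Definition E (v : Z) : list Z :=
  if v =? 0 then [0;4] else if v =? 1 then [0;2;4;6]
  else if v =? 2 then [0;1;2;3;4;5;6;7] else if v =? 3 then [0;3;6]
  else if v =? 4 then [0;5] else [].
Definition r (v : Z) : Z :=
  if v =? 0 then 3 else if v =? 1 then 1 else if v =? 2 then 0
  else if v =? 3 then 2 else 4.

Lemma r_nonneg : forall v, 0 <= r v.
Proof. intro v; unfold r; repeat (destruct (_ =? _)); lia. Qed.

Definition condb (v a b u : Z) : bool :=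
  (0 <=? a) && (a <=? 9) &&
  (-9 <=? (a - b) - (u - v)) && ((a - b) - (u - v) <=? 9) &&
  (negb (a - b =? u - v) || (u =? v) || (r v <? r u)).

Definition check : bool :=
  forallb (fun v => forallb (fun a => forallb (fun b =>
     forallb (fun u => condb v a b u) vals) (E v)) (E v)) vals.

Lemma check_ok : check = true. Proof. vm_compute. reflexivity. Qed.

Lemma vals_bound : forall v, In v vals -> 0 <= v <= 4.
Proof. intros v H; simpl in H; intuition lia. Qed.

Lemma finite_facts : forall v a b u, In v vals -> In a (E v) -> In b (E v) -> In u vals ->
  0 <= a <= 9 /\ -9 <= (a - b) - (u - v) <= 9 /\
  (a - b = u - v -> u = v \/ r v < r u).
Proof.
  intros v a b u Hv Ha Hb Hu.
  pose proof check_ok as H. unfold check in H.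
  rewrite forallb_forall in H. specialize (H v Hv).
  rewrite forallb_forall in H. specialize (H a Ha).
  rewrite forallb_forall in H. specialize (H b Hb).
  rewrite forallb_forall in H. specialize (H u Hu).
  unfold condb in H.
  repeat rewrite Bool.andb_true_iff in H.
  destruct H as [[[[H1 H2] H5] H6] H7].
  apply Z.leb_le in H1, H2, H5, H6.
  split; [lia|]. split; [lia|].
  intro Heq. rewrite (proj2 (Z.eqb_eq _ _) Heq) in H7. simpl in H7.
  rewrite Bool.orb_true_iff in H7. destruct H7 as [H7|H7].
  - left. apply Z.eqb_eq; auto.
  - right. apply Z.ltb_lt; auto.
Qed.

Definition Good (p : Z * Z) : Prop := In (fst p) vals /\ In (snd p) (E (fst p)).

Fixpoint valZ (l : list Z) : Z := match l with [] => 0 | a :: t => a + 10 * valZ t end.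
Fixpoint sumr (l : list Z) : Z := match l with [] => 0 | a :: t => r a + sumr t end.

Lemma sumr_nonneg : forall l, 0 <= sumr l.
Proof. induction l; simpl; [lia|]. pose proof (r_nonneg a); lia. Qed.

Fixpoint B (k : nat) (s : Z) : list (list (Z*Z)) :=
  match k with
  | O => if s =? 0 then [[]] else []
  | S k' => flat_map (fun v => flat_map (fun e => map (cons (v,e)) (B k' (s - r v))) (E v)) vals
  end.

Lemma B_prop : forall k s w, In w (B k s) -> length w = k /\ Forall Good w /\ sumr (map fst w) = s.
Proof.
  induction k; intros s w H.
  - simpl in H. destruct (s =? 0) eqn:Hs; simpl in H; [|contradiction].
    destruct H as [H|H]; [|contradiction]. subst. apply Z.eqb_eq in Hs. simpl. repeat split; auto.
  - cbn [B] in H. apply in_flat_map in H. destruct H as [v [Hv H]].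
    apply in_flat_map in H. destruct H as [e [He H]].
    apply in_map_iff in H. destruct H as [w' [Hw Hin]]. subst w.
    destruct (IHk _ _ Hin) as [H1 [H2 H3]].
    simpl. split; [lia|]. split.
    + constructor; auto. unfold Good; simpl; auto.
    + rewrite H3; lia.
Qed.

Lemma B_neg : forall k s, s < 0 -> B k s = [].
Proof.
  intros k s Hs. destruct (B k s) as [|w l] eqn:H; auto. exfalso.
  assert (Hw : In w (B k s)) by (rewrite H; left; auto).
  apply B_prop in Hw. destruct Hw as [_ [_ Hw]]. pose proof (sumr_nonneg (map fst w)). lia.
Qed.

Lemma len_fm_map : forall (A X Y : Type) (g : A -> X -> Y) (L : list A) (F : list X),
  length (flat_map (fun u => map (g u) F) L) = (length L * length F)%nat.
Proof. induction L; intros; simpl; auto. rewrite length_app, length_map, IHL. reflexivity. Qed.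

Lemma B_len : forall k s, Z.of_nat (length (B (S k) s)) =
  2 * Z.of_nat (length (B k (s - 3))) + 4 * Z.of_nat (length (B k (s - 1))) +
  8 * Z.of_nat (length (B k (s - 0))) + 3 * Z.of_nat (length (B k (s - 2))) +
  2 * Z.of_nat (length (B k (s - 4))).
Proof.
  intros k s. cbn [B flat_map vals].
  rewrite !length_app.
  rewrite !(len_fm_map _ _ _ (fun e => cons (_, e))).
  change (r 0) with 3; change (r 1) with 1; change (r 2) with 0; change (r 3) with 2; change (r 4) with 4.
  change (length (E 0)) with 2%nat; change (length (E 1)) with 4%nat; change (length (E 2)) with 8%nat; change (length (E 3)) with 3%nat; change (length (E 4)) with 2%nat.
  change (length (@nil (list (Z*Z)))) with 0%nat. lia.
Qed.

Definition get (l : list Z) (s : Z) : Z := if s <? 0 then 0 else nth (Z.to_nat s) l 0.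
Definition win : list Z := map Z.of_nat (seq 0 61).
Definition step (l : list Z) : list Z :=
  map (fun s => 2 * get l (s - 3) + 4 * get l (s - 1) + 8 * get l (s - 0)
               + 3 * get l (s - 2) + 2 * get l (s - 4)) win.
Fixpoint row (k : nat) : list Z :=
  match k with O => map (fun s => if s =? 0 then 1 else 0) win | S k' => step (row k') end.

Lemma get_map_win : forall f s, 0 <= s < 61 -> get (map f win) s = f s.
Proof.
  intros f s Hs. unfold get. destruct (s <? 0) eqn:E1; [apply Z.ltb_lt in E1; lia|].
  rewrite nth_indep with (d' := f 0).
  2:{ unfold win; rewrite !length_map, length_seq; lia. }
  rewrite map_nth. unfold win.
  rewrite nth_indep with (d' := Z.of_nat 0) by (rewrite length_map, length_seq; lia).
  rewrite map_nth, seq_nth by lia. f_equal. lia.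
Qed.

Lemma row_ok : forall k s, s < 61 -> get (row k) s = Z.of_nat (length (B k s)).
Proof.
  induction k; intros s Hs.
  - destruct (Z_lt_le_dec s 0) as [Hn|Hn].
    + unfold get. rewrite (proj2 (Z.ltb_lt _ _) Hn). rewrite B_neg; auto.
    + cbn [row]. rewrite get_map_win by lia. simpl. destruct (s =? 0); reflexivity.
  - destruct (Z_lt_le_dec s 0) as [Hn|Hn].
    + unfold get. rewrite (proj2 (Z.ltb_lt _ _) Hn). rewrite B_neg; auto.
    + cbn [row]. unfold step. rewrite get_map_win by lia.
      rewrite B_len. rewrite !IHk by lia. reflexivity.
Qed.

Definition N0 : Z := get (row 48) 60.
Lemma N0_big : 10^60 <= N0.
Proof. apply Z.leb_le. vm_compute. reflexivity. Qed.

Lemma B0_len : Z.of_nat (length (B 48 60)) = N0.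
Proof. unfold N0. rewrite row_ok by lia. reflexivity. Qed.

Lemma NoDup_flat_map' : forall (A C : Type) (f : A -> list C) (l : list A),
  NoDup l -> (forall x, In x l -> NoDup (f x)) ->
  (forall x y c, In x l -> In y l -> In c (f x) -> In c (f y) -> x = y) ->
  NoDup (flat_map f l).
Proof.
  induction l; intros Hl Hf Hd; simpl. constructor.
  inversion Hl; subst. apply NoDup_app.
  - apply Hf; left; auto.
  - apply IHl; auto.
    + intros; apply Hf; right; auto.
    + intros x y c Hx Hy; apply Hd; right; auto.
  - intros c Hc Hc'. apply in_flat_map in Hc'. destruct Hc' as [y [Hy Hcy]].
    assert (a = y) by (apply (Hd a y c); auto; [left|right]; auto). subst. contradiction.
Qed.

Lemma NoDup_vals : NoDup vals.
Proof. unfold vals. repeat constructor; simpl; intuition lia. Qed.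

Lemma NoDup_E : forall v, In v vals -> NoDup (E v).
Proof.
  intros v Hv. simpl in Hv. intuition; subst; simpl; repeat constructor; simpl; intuition lia.
Qed.

Lemma NoDup_B : forall k s, NoDup (B k s).
Proof.
  induction k; intros s.
  - simpl. destruct (s =? 0); repeat constructor. intro H; inversion H.
  - cbn [B]. apply NoDup_flat_map'.
    + apply NoDup_vals.
    + intros v Hv. apply NoDup_flat_map'.
      * apply NoDup_E; auto.
      * intros e He. apply NoDup_map_NoDup_ForallPairs; [|apply IHk].
        intros x y _ _ H. injection H; auto.
      * intros e e' c _ _ H1 H2. apply in_map_iff in H1, H2.
        destruct H1 as [w1 [H1 _]]; destruct H2 as [w2 [H2 _]]. subst. injection H2; auto.
    + intros v v' c _ _ H1 H2. apply in_flat_map in H1, H2.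
      destruct H1 as [e1 [_ H1]]; destruct H2 as [e2 [_ H2]].
      apply in_map_iff in H1, H2.
      destruct H1 as [w1 [H1 _]]; destruct H2 as [w2 [H2 _]]. subst. injection H2; auto.
Qed.

Section FullSec.
Variable B0 : list (list (Z*Z)).
Hypothesis HB0 : forall u, In u B0 -> length u = 48%nat /\ Forall Good u /\ sumr (map fst u) = 60.
Hypothesis NB0 : NoDup B0.

Fixpoint Full (M : nat) : list (list (Z*Z)) :=
  match M with O => [[]] | S M' => flat_map (fun u => map (fun w => u ++ w) (Full M')) B0 end.

Lemma Full_prop : forall M z, In z (Full M) ->
  length z = (48 * M)%nat /\ Forall Good z /\ sumr (map fst z) = 60 * Z.of_nat M.
Proof.
  induction M; intros z H.
  - simpl in H. destruct H as [H|H]; [|contradiction]. subst. simpl. auto.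
  - cbn [Full] in H. apply in_flat_map in H. destruct H as [u [Hu H]].
    apply in_map_iff in H. destruct H as [w [Hw Hin]]. subst z.
    apply HB0 in Hu. destruct Hu as [L1 [G1 S1]].
    destruct (IHM _ Hin) as [L2 [G2 S2]].
    split; [rewrite length_app; lia|]. split.
    + apply Forall_app; auto.
    + assert (forall a b, sumr (a ++ b) = sumr a + sumr b).
      { induction a; intros; simpl; auto. rewrite IHa; lia. }
      rewrite map_app, H, S1, S2. lia.
Qed.

Lemma Full_len : forall M, length (Full M) = (length B0 ^ M)%nat.
Proof.
  induction M; [reflexivity|]. cbn [Full].
  rewrite (len_fm_map _ _ _ (fun u w => u ++ w)). rewrite IHM. rewrite Nat.pow_succ_r'. reflexivity.
Qed.

Lemma app_same_len : forall (A : Type) (u u' w w' : list A),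
  length u = length u' -> u ++ w = u' ++ w' -> u = u' /\ w = w'.
Proof.
  induction u; intros u' w w' L H; destruct u'; simpl in *; try discriminate; auto.
  injection L as L. injection H as H1 H2. subst. destruct (IHu _ _ _ L H2). subst; auto.
Qed.

Lemma NoDup_Full : forall M, NoDup (Full M).
Proof.
  induction M.
  - repeat constructor. intro H; inversion H.
  - cbn [Full]. apply NoDup_flat_map'.
    + apply NB0.
    + intros u _. apply NoDup_map_NoDup_ForallPairs; auto.
      intros x y _ _ H. apply app_inv_head in H; auto.
    + intros u u' c Hu Hu' H1 H2. apply in_map_iff in H1, H2.
      destruct H1 as [w1 [H1 _]]; destruct H2 as [w2 [H2 _]]. subst.
      apply HB0 in Hu, Hu'.
      apply app_same_len in H2; [destruct H2; auto|]. destruct Hu as [-> _]; destruct Hu' as [-> _]; auto.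
Qed.

End FullSec.

Definition digit (t : Z) : Prop := 0 <= t <= 9.

Lemma Good_digits : forall z, Forall Good z -> Forall digit (map fst z) /\ Forall digit (map snd z).
Proof.
  induction z; intros H; simpl; [split; constructor|].
  inversion H; subst. destruct (IHz H3). destruct H2 as [Hv Ha].
  pose proof (vals_bound _ Hv). pose proof (finite_facts _ _ _ _ Hv Ha Ha Hv) as [Hd _].
  split; constructor; auto; unfold digit; lia.
Qed.

Lemma val_bound : forall a, Forall digit a -> 0 <= valZ a < 10 ^ Z.of_nat (length a).
Proof.
  induction a; intros H; [simpl; lia|].
  inversion H; subst. destruct (IHa H3). unfold digit in H2.
  cbn [valZ length]. rewrite Nat2Z.inj_succ, Z.pow_succ_r by lia. lia.
Qed.

Lemma val_inj : forall a a', length a = length a' -> Forall digit a -> Forall digit a' ->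
  valZ a = valZ a' -> a = a'.
Proof.
  induction a as [|h t IH]; intros a' L H H' E; destruct a' as [|h' t']; cbn [valZ length] in *; try discriminate; auto.
  inversion H as [|? ? Hh Ht]; inversion H' as [|? ? Hh' Ht']; subst. unfold digit in Hh, Hh'.
  assert (h' = h /\ valZ t = valZ t') as [-> Hv] by lia.
  f_equal. apply IH; auto.
Qed.

Lemma pairs_eq : forall (z z' : list (Z*Z)), map fst z = map fst z' -> map snd z = map snd z' -> z = z'.
Proof.
  induction z; intros z' H1 H2; destruct z'; simpl in *; try discriminate; auto.
  injection H1 as A1 A2; injection H2 as B1 B2. destruct a, p; simpl in *; subst. f_equal. auto.
Qed.

Lemma corner_digits : forall z1 z2 z3 : list (Z*Z),
  length z1 = length z2 -> length z1 = length z3 ->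
  Forall Good z1 -> Forall Good z2 -> Forall Good z3 ->
  map fst z1 = map fst z2 ->
  valZ (map fst z3) - valZ (map fst z1) = valZ (map snd z2) - valZ (map snd z1) ->
  Forall2 (fun v u => u = v \/ r v < r u) (map fst z1) (map fst z3).
Proof.
  induction z1 as [|[v b] t1 IH]; intros z2 z3 L12 L13 G1 G2 G3 F Hd.
  - destruct z3; simpl in *; [constructor | discriminate].
  - destruct z2 as [|[v2 a] t2]; [discriminate|]. destruct z3 as [|[u c] t3]; [discriminate|].
    cbn [map fst snd valZ length] in *. injection F as Hv Ft. subst v2.
    inversion G1 as [|? ? [Hv Hb] G1']; inversion G2 as [|? ? [_ Ha] G2'];
      inversion G3 as [|? ? [Hu _] G3']; subst. cbn [fst snd] in *.
    pose proof (finite_facts v a b u Hv Ha Hb Hu) as [_ [Hr Himp]].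
    assert (Heq: a - b = u - v /\ valZ (map fst t3) - valZ (map fst t1) = valZ (map snd t2) - valZ (map snd t1)) by lia.
    destruct Heq as [Heq Ht]. constructor; [apply Himp; auto | apply IH with t2; auto; lia].
Qed.

Lemma sumr_le : forall xs us, Forall2 (fun v u => u = v \/ r v < r u) xs us -> sumr xs <= sumr us.
Proof. intros xs us H; induction H; simpl; [lia|]. destruct H; [subst|]; lia. Qed.

Lemma pot : forall xs us, Forall2 (fun v u => u = v \/ r v < r u) xs us -> sumr xs = sumr us -> xs = us.
Proof.
  intros xs us H; induction H; intros E; auto. simpl in E. pose proof (sumr_le _ _ H0).
  destruct H as [->|H]; [f_equal; apply IHForall2; lia | lia].
Qed.

Definition toPoint (z : list (Z*Z)) : Z * Z := (1 + valZ (map fst z), 1 + valZ (map snd z)).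

Section SSec.
Variable B0 : list (list (Z*Z)).
Hypothesis HB0 : forall u, In u B0 -> length u = 48%nat /\ Forall Good u /\ sumr (map fst u) = 60.
Hypothesis NB0 : NoDup B0.
Definition Sset (M : nat) : list (Z*Z) := map toPoint (Full B0 M).

Lemma Sset_nodup : forall M, NoDup (Sset M).
Proof.
  intro M. unfold Sset. apply NoDup_map_NoDup_ForallPairs; [|apply NoDup_Full; auto].
  intros z z' Hz Hz' H. unfold toPoint in H. pose proof (f_equal fst H) as H1; pose proof (f_equal snd H) as H2; cbn [fst snd] in H1, H2.
  apply (Full_prop B0 HB0) in Hz, Hz'. destruct Hz as [L [G _]]; destruct Hz' as [L' [G' _]].
  apply Good_digits in G, G'. destruct G, G'.
  apply pairs_eq; apply val_inj; auto; try (rewrite !length_map; lia); lia.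
Qed.

Lemma Sset_free : forall M, skew_corner_free (Sset M).
Proof.
  intros M x y y' d Hd [H1 [H2 H3]]. unfold Sset in *.
  apply in_map_iff in H1, H2, H3.
  destruct H1 as [z1 [E1 I1]]; destruct H2 as [z2 [E2 I2]]; destruct H3 as [z3 [E3 I3]].
  unfold toPoint in E1, E2, E3. pose proof (f_equal fst E1) as X1; pose proof (f_equal snd E1) as Y1; pose proof (f_equal fst E2) as X2; pose proof (f_equal snd E2) as Y2; pose proof (f_equal fst E3) as X3; cbn [fst snd] in X1, Y1, X2, Y2, X3.
  apply (Full_prop B0 HB0) in I1, I2, I3.
  destruct I1 as [L1 [G1 S1]]; destruct I2 as [L2 [G2 S2]]; destruct I3 as [L3 [G3 S3]].
  pose proof (Good_digits _ G1) as [D1 _]. pose proof (Good_digits _ G2) as [D2 _].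
  assert (F12 : map fst z1 = map fst z2).
  { apply val_inj; auto; try (rewrite !length_map; lia). lia. }
  assert (HF := corner_digits z1 z2 z3 ltac:(lia) ltac:(lia) G1 G2 G3 F12 ltac:(lia)).
  apply pot in HF; [|lia].
  rewrite <- HF in X3. lia.
Qed.

Lemma Sset_grid : forall M n, 10 ^ (48 * Z.of_nat M) <= n -> forall p, In p (Sset M) -> in_grid n p.
Proof.
  intros M n Hn p Hp. unfold Sset in Hp. apply in_map_iff in Hp. destruct Hp as [z [<- Hz]].
  apply (Full_prop B0 HB0) in Hz. destruct Hz as [L [G _]]. apply Good_digits in G. destruct G as [D1 D2].
  apply val_bound in D1, D2. rewrite length_map, L in D1, D2.
  rewrite Nat2Z.inj_mul in D1, D2. change (Z.of_nat 48) with 48 in D1, D2. unfold in_grid, toPoint; cbn [fst snd]. lia.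
Qed.

End SSec.

Lemma exM : forall N : Z, 1 <= N -> exists M : nat,
  10 ^ (48 * Z.of_nat M) <= N < 10 ^ (48 * Z.of_nat M + 48).
Proof.
  assert (H : forall f : nat, forall N, 1 <= N <= Z.of_nat f -> exists M : nat,
    10 ^ (48 * Z.of_nat M) <= N < 10 ^ (48 * Z.of_nat M + 48)).
  { induction f; intros N HN; [lia|].
    set (Bz := 10 ^ 48).
    assert (HB : 2 <= Bz) by (unfold Bz; lia).
    destruct (Z_lt_le_dec N Bz) as [Hl|Hl].
    - exists 0%nat. simpl. lia.
    - pose proof (Z.div_mod N Bz ltac:(lia)) as Hdm. pose proof (Z.mod_pos_bound N Bz ltac:(lia)) as Hm.
      set (N' := N / Bz) in *. set (R := N mod Bz) in *.
      assert (1 <= N') by nia.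
      destruct (IHf N' ltac:(lia)) as [M' HM'].
      exists (S M'). rewrite Nat2Z.inj_succ.
      replace (48 * Z.succ (Z.of_nat M')) with (48 * Z.of_nat M' + 48) by lia.
      replace (48 * Z.of_nat M' + 48 + 48) with ((48 * Z.of_nat M' + 48) + 48) by lia.
      rewrite (Z.pow_add_r 10 (48 * Z.of_nat M' + 48) 48) by lia.
      rewrite (Z.pow_add_r 10 (48 * Z.of_nat M') 48) in HM' |- * by lia. fold Bz in HM' |- *.
      set (P := 10 ^ (48 * Z.of_nat M')) in *.
      assert (0 < P) by (unfold P; apply Z.pow_pos_nonneg; lia).
      destruct HM' as [HM1 HM2].
      assert (Bz * P <= Bz * N') by (apply Z.mul_le_mono_nonneg_l; lia).
      assert (Bz * (N' + 1) <= Bz * (P * Bz)) by (apply Z.mul_le_mono_nonneg_l; lia).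
      split; nia. }
  intros N HN. apply (H (Z.to_nat N)). lia.
Qed.

Theorem theorem1p1 :
  exists c : R, (0 < c)%R /\
    forall n : nat, (1 <= n)%nat ->
      exists S : list (Z * Z),
        NoDup S /\
        (forall p, In p S -> in_grid (Z.of_nat n) p) /\
        skew_corner_free S /\
        (c * Rpower (INR n) (5 / 4) <= INR (length S))%R.
Proof.
  exists (/ 10 ^ 60)%R. split.
  { apply Rinv_0_lt_compat, pow_lt; lra. }
  intros n Hn.
  destruct (exM (Z.of_nat n) ltac:(lia)) as [M [HM1 HM2]].
  assert (HB0 : forall u, In u (B 48 60) -> length u = 48%nat /\ Forall Good u /\ sumr (map fst u) = 60)
    by (intros u Hu; apply B_prop in Hu; exact Hu).
  pose proof (NoDup_B 48 60) as NB0.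
  pose proof B0_len as HL.
  set (B0 := B 48 60) in *. clearbody B0.
  exists (Sset B0 M). split; [apply Sset_nodup; auto|]. split; [apply (Sset_grid B0 HB0 M); lia|].
  split; [apply Sset_free; auto|].
  assert (HN0 : (10^60 <= INR (length B0))%R).
  { rewrite INR_IZR_INZ, HL.
    change (10^60)%R with (IZR 10 ^ 60)%R. rewrite pow_IZR.
    apply IZR_le. apply N0_big. }
  assert (Hlen : INR (length (Sset B0 M)) = (INR (length B0) ^ M)%R).
  { unfold Sset. rewrite length_map, Full_len, pow_INR. reflexivity. }
  assert (Hup : (INR n <= 10 ^ (48 * M + 48))%R).
  { rewrite INR_IZR_INZ. change 10%R with (IZR 10). rewrite pow_IZR.
    apply IZR_le. rewrite Nat2Z.inj_add, Nat2Z.inj_mul. simpl (Z.of_nat 48). lia. }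
  assert (Hpos : (0 < INR n)%R) by (apply lt_0_INR; lia).
  assert (Hrp : (Rpower (INR n) (5/4) <= 10 ^ 60 * (10 ^ 60) ^ M)%R).
  { eapply Rle_trans.
    - apply Rle_Rpower_l; [lra|]. split; [exact Hpos| exact Hup].
    - rewrite <- Rpower_pow by lra. rewrite Rpower_mult.
      replace (INR (48 * M + 48) * (5 / 4))%R with (INR (60 * M + 60)).
      2:{ rewrite !plus_INR, !mult_INR.
          replace (INR 48) with 48%R by (rewrite INR_IZR_INZ; reflexivity).
          replace (INR 60) with 60%R by (rewrite INR_IZR_INZ; reflexivity). lra. }
      rewrite Rpower_pow by lra. rewrite pow_add, pow_mult.
      rewrite Rmult_comm. apply Rle_refl. }
  rewrite Hlen.
  assert (Hp : ((10 ^ 60) ^ M <= INR (length B0) ^ M)%R).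
  { apply pow_incr. split; [apply pow_le; lra | exact HN0]. }
  assert (H60 : (0 < 10 ^ 60)%R) by (apply pow_lt; lra).
  apply Rle_trans with (/ 10 ^ 60 * (10 ^ 60 * (10 ^ 60) ^ M))%R.
  - apply Rmult_le_compat_l; [left; apply Rinv_0_lt_compat; lra | exact Hrp].
  - rewrite <- Rmult_assoc, Rinv_l by lra. lra.
Qed.
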